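(* Let $L$ be a relational language and $<\,\notin L$ a binary relation symbol. Let $\mathcal{S} = (S, L^S, <^S)$ be an enumerated $L$-structure such that $(S, L^S)$ is a Fraïssé limit which has finite big Ramsey degrees, whose age has the strong amalgamation property, and which has natural 1-point extensions. Let $\mathbf{K} = \mathrm{Fin}(\mathcal{S})$, viewed as a category with embeddings as morphisms, as a full subcategory of the category $\mathbf{C}$ of all $(L\cup\{<\})$-structures with embeddings, with discrete enrichment. Then: (a) $\mathbf{K}$ has natural 1-point extensions. (b) $\mathcal{S}$ is approximable in $\mathbf{K}$. (c) Fix a functor $F : \mathbf{K}\to\mathbf{K}$ and a family $(\Phi_\mathcal{A})_{\mathcal{A}\in\mathbf{K}}$ such that $\mathcal{S}$ is approximable in $\mathbf{K}$ via (the object map of) $F$ and $(\Phi_\mathcal{A})$, and for each $\mathcal{B}\in\mathbf{K}$ fix an embedding $\iota_\mathcal{B} : \mathcal{B}\hookrightarrow\mathcal{S}$. For every $\mathcal{A}\in\mathbf{K}$ there is an $n\in\mathbb{N}$ such that for every $k\in\mathbb{N}$ and every coloring $\chi : \bigcup_{\mathcal{B}\in\mathbf{K}}\mathrm{Emb}(\mathcal{A},\mathcal{B})\to k$ there is $h\in\mathrm{Emb}(\mathcal{S},\mathcal{S})$ with $$\Big|\chi\Big(\bigcup_{\mathcal{B}\in\mathbf{K}} h\star\mathrm{Emb}(\mathcal{A},\mathcal{B})\Big)\Big|\le n,$$ where $h\star f = \Phi_\mathcal{B}(h\circ\iota_{F(\mathcal{B})})\circ f$ for $f\in\mathrm{E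mb}(\mathcal{A},\mathcal{B})$.
   Context: For $L$-structures, an embedding is an injective map preserving and reflecting all relations; $\mathrm{Emb}(\mathcal{A},\mathcal{B})$ is the set of embeddings. $\mathcal{A}\le\mathcal{B}$ means $\mathcal{A}$ is a substructure (induced) of $\mathcal{B}$; for nonempty $C\subseteq B$, $\mathcal{B}[C]$ is the induced substructure. $\mathrm{Fin}(\mathcal{S}) = \{\mathcal{S}[A] : \varnothing\neq A\subseteq S, A \text{ finite}\}$. An enumerated $L$-structure is an $(L\cup\{<\})$-structure $(S,L^S,<^S)$ with $(S,<^S)$ a linear order of type $\omega$. A Fraïssé limit is a countably infinite ultrahomogeneous structure; its age (class of finite structures embeddable in it) has strong amalgamation if for all embeddings $f:\mathcal{A}\hookrightarrow\mathcal{B}$, $g:\mathcal{A}\hookrightarrow\mathcal{C}$ in the age there are $\mathcal{D}$ in the age and embeddings $f':\mathcal{B}\hookrightarrow\mathcal{D}$, $g':\mathcal{C}\hookrightarrow\mathcal{D}$ with $f'\circ f=g'\circ g$ and $f'(B)\cap g'(C)=f'(f(A))$. A countable structure $\mathcal{F}$ has finite big Ramsey degrees if for every finite $\mathcal{A}$ in its age there is $n\in\mathbb{N}$ such that for every $k$ and every coloring $\chi:\mathrm{Emb}(\mathcal{A},\mathcal{F})\to k$ there is $w\in\mathrm{Emb}(\mathcal{F},\mathcal{F})$ with $|\chi(w\circ\mathrm{Emb}(\mathcal{A},\mathcal{F}))|\le n$; the least such $n$ is $T(\mathcal{A},\mathcal{F})$. A structure $\mathcal{F}$ has natural 1-point extensions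 if there is a functor $J:\mathrm{Fin}(\mathcal{F})\to\mathrm{Fin}(\mathcal{F})$ (morphisms: embeddings) such that for every $\mathcal{A}=(A,L^A)\in\mathrm{Fin}(\mathcal{F})$ with $J(\mathcal{A})=(A',L^{A'})$ we have $\mathcal{A}\le J(\mathcal{A})$ and $|A'\setminus A|=1$, and for every embedding $f:\mathcal{A}\hookrightarrow\mathcal{B}$ in $\mathrm{Fin}(\mathcal{F})$, $J(f)(a)=f(a)$ for $a\in A$ and $J(f)$ maps the point of $A'\setminus A$ to the point of $B'\setminus B$. (Statement (a) means the class $\mathbf{K}=\mathrm{Fin}(\mathcal{S})$ of finite substructures of the enumerated structure, with embeddings, admits such a functor.) For a category $\mathbf{C}$ enriched over $\mathbf{Top}$ (here discretely), a full subcategory $\mathbf{D}$ and $S\in\mathrm{Ob}(\mathbf{C})$, $S$ is approximable in $\mathbf{D}$ if there are a map $F:\mathrm{Ob}(\mathbf{D})\to\mathrm{Ob}(\mathbf{D})$ and Borel maps $\Phi_A:\hom_\mathbf{C}(F(A),S)\to\bigcup_{C\in\mathrm{Ob}(\mathbf{D})}\hom_\mathbf{D}(A,C)$ such that for all $A,B\in\mathrm{Ob}(\mathbf{D})$, $f\in\hom_\mathbf{D}(A,B)$ and $u\in\hom_\mathbf{C}(F(B),S)$ there is $f'\in\hom_\mathbf{D}(F(A),F(B))$ with $\Phi_A(u\cdot f')=\Phi_B(u)\cdot f$. *)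

(* Defs.v *)
From Stdlib Require List.
From mathcomp Require Import all_boot.
Set Implicit Arguments. Unset Strict Implicit. Unset Printing Implicit Defensive.

Record language := Language { sym : Type; arity : sym -> nat }.

Record structure (L : language) := Structure {
  car :> Type;
  rel : forall s : sym L, ('I_(@arity L s) -> car) -> Prop }.
Arguments rel {L} _ _ _.

Definition is_emb (L : language) (A B : structure L) (f : A -> B) : Prop :=
  injective f /\ forall (s : sym L) (t : 'I_(@arity L s) -> A), rel A s t <-> rel B s (f \o t).

Definition Emb (L : language) (A B : structure L) := {f : A -> B | is_emb f}.

Definition emb_fun (L : language) (A B : structure L) (f : Emb A B) : A -> B := proj1_sig f.
Coercion emb_fun : Emb >-> Funclass.

Lemma is_emb_comp (L : language) (A B C : structure L) (g : Emb B C) (f : Emb A B) :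
  is_emb (fun x => g (f x)).
Proof.
case: g => g [gi gr]; case: f => f [fi fr]; split => /=.
- by move=> x y /gi /fi.
- by move=> s t; rewrite fr gr.
Qed.

Definition comp (L : language) (A B C : structure L) (g : Emb B C) (f : Emb A B) : Emb A C :=
  exist _ (fun x => g (f x)) (is_emb_comp g f).

Lemma is_emb_id (L : language) (A : structure L) : is_emb (fun x : A => x).
Proof. by split => // x y. Qed.

Definition id_emb (L : language) (A : structure L) : Emb A A := exist _ (fun x => x) (is_emb_id A).

Definition finite_pred (T : Type) (A : T -> Prop) : Prop :=
  exists l : list T, forall x, A x -> List.In x l.

Definition finite_type (T : Type) : Prop := exists l : list T, forall x : T, List.In x l.

Definition sub (L : language) (X : structure L) (A : X -> Prop) : structure L :=
  {| car := {x : X | A x};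
     rel := fun s t => rel X s (fun i => proj1_sig (t i)) |}.
Arguments sub {L} X A.

(* Objects of Fin(X): finite nonempty subsets A of X, standing for X[A] *)
Definition FinObj (L : language) (X : structure L) :=
  {A : X -> Prop | finite_pred A /\ exists x, A x}.

Definition pr (L : language) (X : structure L) (A : FinObj X) : X -> Prop := proj1_sig A.

Definition Fin (L : language) (X : structure L) (A : FinObj X) : structure L := @sub L X (@pr L X A).

(* the language L u {<}: the new symbol (None) is binary and not in L *)
Definition ext (L : language) : language :=
  {| sym := option (sym L);
     arity := fun o => match o with Some s => @arity L s | None => 2 end |}.

Definition pair2 (T : Type) (x y : T) : 'I_2 -> T :=
  fun i => if nat_of_ord i is 0 then x else y.

Definition ltS (L : language) (X : structure (ext L)) (x y : X) : Prop :=
  rel X None (pair2 x y).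

Definition enumerated (L : language) (X : structure (ext L)) : Prop :=
  exists e : nat -> X, bijective e /\ forall m n, ltS (e m) (e n) <-> (m < n)%N.

Definition reduct (L : language) (X : structure (ext L)) : structure L :=
  {| car := car X; rel := fun s t => rel X (Some s) t |}.

Definition countably_infinite (T : Type) : Prop := exists e : nat -> T, bijective e.

Definition surjective (T U : Type) (f : T -> U) : Prop := forall y, exists x, f x = y.

Definition ultrahomogeneous (L : language) (X : structure L) : Prop :=
  forall (A B : X -> Prop), finite_pred A -> finite_pred B ->
  forall f : Emb (sub X A) (sub X B), surjective f ->
  exists g : Emb X X, surjective g /\ forall x : sub X A, g (proj1_sig x) = proj1_sig (f x).

Definition fraisse_limit (L : language) (X : structure L) : Prop :=
  countably_infinite X /\ ultrahomogeneous X.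

Definition in_age (L : language) (X : structure L) (A : structure L) : Prop :=
  finite_type A /\ inhabited (Emb A X).

Definition strong_amalgamation (L : language) (X : structure L) : Prop :=
  forall (A B C : structure L) (f : Emb A B) (g : Emb A C),
  in_age X A -> in_age X B -> in_age X C ->
  exists (D : structure L) (f' : Emb B D) (g' : Emb C D),
    in_age X D /\ (forall a, f' (f a) = g' (g a)) /\
    (forall d : D, ((exists b, f' b = d) /\ (exists c, g' c = d)) <-> exists a, f' (f a) = d).

Definition finite_big_ramsey_degrees (L : language) (X : structure L) : Prop :=
  forall A : structure L, in_age X A ->
  exists n : nat, forall (k : nat) (chi : Emb A X -> 'I_k),
  exists w : Emb X X, exists s : seq 'I_k,
    (size s <= n)%N /\ forall e : Emb A X, chi (comp w e) \in s.

Definition nat_1pt_ext (L : language) (X : structure L) : Prop :=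
  exists (J : FinObj X -> FinObj X)
         (Jm : forall A B : FinObj X, Emb (Fin A) (Fin B) -> Emb (Fin (J A)) (Fin (J B))),
    (forall A : FinObj X, Jm A A (id_emb (Fin A)) = id_emb (Fin (J A))) /\
    (forall (A B C : FinObj X) (f : Emb (Fin A) (Fin B)) (g : Emb (Fin B) (Fin C)),
        Jm A C (comp g f) = comp (Jm B C g) (Jm A B f)) /\
    (forall A : FinObj X, (forall x, pr A x -> pr (J A) x) /\
        exists p, pr (J A) p /\ ~ pr A p /\ forall q, pr (J A) q -> ~ pr A q -> q = p) /\
    (forall (A B : FinObj X) (f : Emb (Fin A) (Fin B)) (x : Fin (J A)) (y : Fin A),
        proj1_sig x = proj1_sig y -> proj1_sig (Jm A B f x) = proj1_sig (f y)) /\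
    (forall (A B : FinObj X) (f : Emb (Fin A) (Fin B)) (x : Fin (J A)),
        ~ pr A (proj1_sig x) -> ~ pr B (proj1_sig (Jm A B f x))).

(* ---------- approximability (discrete enrichment: every map is Borel) ---------- *)
(* the disjoint union  U_{C in K} hom_K(A, C) *)
Definition Ucod (L : language) (X : structure L) (A : FinObj X) :=
  {C : FinObj X & Emb (Fin A) (Fin C)}.

Definition approx_via (L : language) (X : structure L) (F : FinObj X -> FinObj X)
  (Phi : forall A : FinObj X, Emb (Fin (F A)) X -> Ucod A) : Prop :=
  forall (A B : FinObj X) (f : Emb (Fin A) (Fin B)) (u : Emb (Fin (F B)) X),
  exists f' : Emb (Fin (F A)) (Fin (F B)),
    Phi A (comp u f') = existT _ (projT1 (Phi B u)) (comp (projT2 (Phi B u)) f).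

Arguments approx_via {L X} F Phi.

Definition approximable (L : language) (X : structure L) : Prop :=
  exists (F : FinObj X -> FinObj X) (Phi : forall A : FinObj X, Emb (Fin (F A)) X -> Ucod A),
    approx_via F Phi.

Definition is_functor (L : language) (X : structure L) (F : FinObj X -> FinObj X)
  (Fm : forall A B : FinObj X, Emb (Fin A) (Fin B) -> Emb (Fin (F A)) (Fin (F B))) : Prop :=
  (forall A : FinObj X, Fm A A (id_emb (Fin A)) = id_emb (Fin (F A))) /\
  (forall (A B C : FinObj X) (f : Emb (Fin A) (Fin B)) (g : Emb (Fin B) (Fin C)),
      Fm A C (comp g f) = comp (Fm B C g) (Fm A B f)).

Arguments is_functor {L X} F Fm.

Definition star (L : language) (X : structure L) (F : FinObj X -> FinObj X)
  (Phi : forall A : FinObj X, Emb (Fin (F A)) X -> Ucod A)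
  (iota : forall B : FinObj X, Emb (Fin B) X)
  (h : Emb X X) (A B : FinObj X) (f : Emb (Fin A) (Fin B)) : Ucod A :=
  existT _ (projT1 (Phi B (comp h (iota (F B)))))
           (comp (projT2 (Phi B (comp h (iota (F B))))) f).
Arguments star {L X} F Phi iota h {A B} f.

(* Main.v *)
Require Import Defs.
From mathcomp Require Import all_boot.
Require Import Defs.
From Stdlib Require List.
From Stdlib Require Import Classical ClassicalEpsilon FunctionalExtensionality ProofIrrelevance.
Set Implicit Arguments. Unset Strict Implicit. Unset Printing Implicit Defensive.

Lemma sigE (T : Type) (P : T -> Prop) (x y : {z | P z}) : proj1_sig x = proj1_sig y -> x = y.
Proof. case: x => x px; case: y => y py /= exy; subst y; f_equal; apply: proof_irrelevance. Qed.

Lemma embE (L : language) (A B : structure L) (f g : Emb A B) : (forall x, f x = g x) -> f = g.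
Proof. move=> H; apply: sigE; apply: functional_extensionality; exact: H. Qed.

Lemma emb_inj (L : language) (A B : structure L) (g : Emb A B) : injective g.
Proof. exact: (proj1 (proj2_sig g)). Qed.

Lemma emb_rel (L : language) (A B : structure L) (g : Emb A B) s t :
  rel A s t <-> rel B s (g \o t).
Proof. exact: (proj2 (proj2_sig g) s t). Qed.

Definition upd (T U : Type) (f : T -> U) (x : T) (y : U) : T -> U :=
  fun z => if excluded_middle_informative (z = x) then y else f z.

Lemma upd_eq (T U : Type) (f : T -> U) x y : upd f x y x = y.
Proof. by rewrite /upd; case: excluded_middle_informative. Qed.

Lemma upd_neq (T U : Type) (f : T -> U) x y z : z <> x -> upd f x y z = f z.
Proof. by rewrite /upd; case: excluded_middle_informative. Qed.

Section Generic.
Variable L : language.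
Variable X : structure L.

Definition pemb (P : X -> Prop) (phi : X -> X) :=
  (forall a b, P a -> P b -> phi a = phi b -> a = b) /\
  (forall s (t : 'I_(arity s) -> X), (forall i, P (t i)) ->
     (rel X s t <-> rel X s (phi \o t))).

Lemma pemb_ext (P Q : X -> Prop) phi psi : pemb P phi ->
  (forall z, Q z -> P z) -> (forall z, Q z -> phi z = psi z) -> pemb Q psi.
Proof.
move=> [Hi Hr] HQ He; split.
- by move=> a b qa qb; rewrite -!He //; apply: Hi; apply: HQ.
- move=> s t Ht; have -> : psi \o t = phi \o t.
    by apply: functional_extensionality => i /=; rewrite He.
  by apply: Hr => i; apply: HQ.
Qed.

Lemma emb_sub_pemb (P : X -> Prop) (psi : Emb (sub X P) X) (phi : X -> X) :
  (forall z (pz : P z), phi z = psi (exist _ z pz)) -> pemb P phi.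
Proof.
move=> H; split.
- move=> a b pa pb; rewrite (H a pa) (H b pb) => /emb_inj.
  by move/(f_equal (@proj1_sig _ _)).
- move=> s t Ht.
  pose t' := fun i => exist P (t i) (Ht i).
  have -> : phi \o t = psi \o t'.
    by apply: functional_extensionality => i /=; rewrite (H _ (Ht i)).
  exact: (emb_rel psi t').
Qed.

Definition submap (P Q : X -> Prop) (phi : X -> X) (H : forall z, P z -> Q (phi z))
  : sub X P -> sub X Q := fun a => exist _ (phi (proj1_sig a)) (H _ (proj2_sig a)).

Lemma submap_emb (P Q : X -> Prop) (phi : X -> X) (H : forall z, P z -> Q (phi z)) :
  pemb P phi -> is_emb (submap H).
Proof.
move=> [Hi Hr]; split.
- move=> [a pa] [b pb] /(f_equal (@proj1_sig _ _)) /= e; apply: sigE => /=.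
  exact: Hi.
- move=> s t /=; exact: (Hr s (fun i => proj1_sig (t i)) (fun i => proj2_sig (t i))).
Qed.

Definition subemb (P Q : X -> Prop) (phi : X -> X) (H : forall z, P z -> Q (phi z))
  (Hp : pemb P phi) : Emb (sub X P) (sub X Q) := exist _ (submap H) (submap_emb H Hp).

Lemma pemb_id (P : X -> Prop) : pemb P id.
Proof. by split. Qed.

Lemma val_emb (P : X -> Prop) : is_emb (fun z : sub X P => proj1_sig z).
Proof.
split; first by move=> a b; apply: sigE.
by move=> s t.
Qed.

Definition valE (P : X -> Prop) : Emb (sub X P) X := exist _ _ (val_emb P).

Lemma finite_sub (P : X -> Prop) : finite_pred P -> finite_type (sub X P).
Proof.
move=> [l Hl].
exists (List.flat_map (fun x => match excluded_middle_informative (P x) with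
   | left H => (exist P x H :: nil)%list | right _ => nil end) l).
move=> [y py]; apply/List.in_flat_map; exists y; split; first exact: Hl.
case: excluded_middle_informative => // H; left; exact: sigE.
Qed.

Lemma age_sub (P : X -> Prop) : finite_pred P -> in_age X (sub X P).
Proof. by move=> H; split; [exact: finite_sub | constructor; exact: valE]. Qed.


Lemma finite_app (P Q : X -> Prop) : finite_pred P -> finite_pred Q ->
  finite_pred (fun z => P z \/ Q z).
Proof.
move=> [l1 H1] [l2 H2]; exists (l1 ++ l2)%list => z [pz|qz];
  apply: List.in_or_app; [left; exact: H1 | right; exact: H2].
Qed.

Lemma finite_img (P : X -> Prop) (phi : X -> X) : finite_pred P ->
  finite_pred (fun z => exists a, P a /\ phi a = z).
Proof.
move=> [l H]; exists (List.map phi l) => z [a [pa <-]]; apply: List.in_map; exact: H.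
Qed.

Lemma realize (Hu : ultrahomogeneous X) (Hs : strong_amalgamation X)
  (A D : X -> Prop) (x : X) (phi : X -> X) :
  finite_pred A -> finite_pred D -> ~ A x -> pemb A phi ->
  exists y, ~ D y /\ pemb (fun z => A z \/ z = x) (upd phi x y).
Proof.
move=> fA fD nAx Hphi.
pose Bs := fun z => A z \/ z = x.
pose Cs := fun z => (exists a, A a /\ phi a = z) \/ D z.
have fB : finite_pred Bs.
  apply: finite_app => //; exists (x :: nil)%list => z ->; by left.
have fC : finite_pred Cs by apply: finite_app => //; apply: finite_img.
have HAB : forall z, A z -> Bs (id z) by move=> z az; left.
have HAC : forall z, A z -> Cs (phi z) by move=> z az; left; exists z.
pose f := subemb HAB (pemb_id A).
pose g := subemb HAC Hphi.
have [D' [f' [g' [[_ [k]] [Hfg Hstr]]]]] :=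
  Hs _ _ _ f g (age_sub fA) (age_sub fB) (age_sub fC).
pose Im := fun y => exists c : sub X Cs, k (g' c) = y.
have fIm : finite_pred Im.
  have [lc Hlc] := finite_sub fC.
  exists (List.map (fun c => k (g' c)) lc) => y [c <-]; apply: List.in_map; exact: Hlc.
pose tau := fun y : sub X Im => proj1_sig (constructive_indefinite_description _ (proj2_sig y)).
have tauP : forall y, k (g' (tau y)) = proj1_sig y.
  by move=> y; rewrite /tau; case: constructive_indefinite_description.
have kg_inj : forall c1 c2, k (g' c1) = k (g' c2) -> c1 = c2.
  by move=> c1 c2 /emb_inj /emb_inj.
have tau_emb : is_emb tau.
  split.
  - move=> y1 y2 e; apply: sigE; by rewrite -!tauP e.
  - move=> s t /=.
    have -> : (fun i => proj1_sig (t i)) = k \o (g' \o (tau \o t)).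
      by apply: functional_extensionality => i /=; rewrite tauP.
    rewrite -(emb_rel k) -(emb_rel g'); done.
pose tauE : Emb (sub X Im) (sub X Cs) := exist _ tau tau_emb.
have tau_surj : surjective tauE.
  move=> c; exists (exist Im (k (g' c)) (ex_intro _ c erefl)).
  apply: kg_inj; by rewrite tauP.
have [sigma [_ Hsig]] := Hu _ _ fIm fC tauE tau_surj.
have sigP : forall c, sigma (k (g' c)) = proj1_sig c.
  move=> c; have := Hsig (exist Im (k (g' c)) (ex_intro _ c erefl)) => /= ->.
  congr proj1_sig; apply: kg_inj; by rewrite tauP.
pose psi := comp sigma (comp k f').
pose bx : sub X Bs := exist Bs x (or_intror erefl).
exists (psi bx); split.
- move=> Dy.
  pose c : sub X Cs := exist Cs (psi bx) (or_intror Dy).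
  have e1 : g' c = f' bx.
    have Hk := emb_inj (g:=k); have Hs' := emb_inj (g:=sigma); apply: Hk; apply: Hs'.
    by rewrite sigP.
  have [[a pa] /= ea] : exists a, f' (f a) = f' bx.
    by apply/Hstr; split; [exists bx | exists c].
  move/emb_inj: ea => /(f_equal (@proj1_sig _ _)) /= eax.
  by apply: nAx; rewrite -eax.
- apply: (emb_sub_pemb (psi := psi)) => z pz.
  case: (classic (z = x)) => [ezx|nzx].
  + subst z; rewrite upd_eq; congr (psi _); exact: sigE.
  + rewrite upd_neq //.
    have az : A z by case: pz.
    have -> : exist Bs z pz = f (exist A z az) by apply: sigE.
    rewrite /psi /= Hfg; have := sigP (g (exist A z az)); by [].
Qed.

End Generic.

Lemma pair2_eta (T : Type) (t : 'I_2 -> T) : t = pair2 (t ord0) (t (lift ord0 ord0)).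
Proof.
apply: functional_extensionality => -[[|[|m]] Hi] /=.
- by congr t; apply: val_inj.
- by congr t; apply: val_inj.
- by [].
Qed.

Lemma pair2_comp (T U : Type) (f : T -> U) x y : f \o pair2 x y = pair2 (f x) (f y).
Proof. by apply: functional_extensionality => -[[|m] Hi]. Qed.

Section Ext.
Variable L : language.

Lemma ext_emb (U V : structure (ext L)) (f : U -> V) :
  injective f -> (forall s t, rel U (Some s) t <-> rel V (Some s) (f \o t)) ->
  (forall x y, ltS x y <-> ltS (f x) (f y)) -> is_emb f.
Proof.
move=> Hi Hr Hl; split => // -[s|] t; first exact: Hr.
rewrite /= in t *; rewrite (pair2_eta t) pair2_comp; exact: Hl.
Qed.

Lemma emb_lt (U V : structure (ext L)) (f : Emb U V) x y : ltS x y <-> ltS (f x) (f y).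
Proof. by rewrite /ltS -pair2_comp; exact: (emb_rel f (s:=None)). Qed.

Lemma emb_red (U V : structure (ext L)) (f : Emb U V) : is_emb (A:=reduct U) (B:=reduct V) f.
Proof. split; [exact: (emb_inj (g:=f)) | move=> s t; exact: (emb_rel f (s:=Some s))]. Qed.

Definition redE (U V : structure (ext L)) (f : Emb U V) : Emb (reduct U) (reduct V) :=
  exist _ _ (emb_red f).

Lemma ltS_sub (S : structure (ext L)) (P : S -> Prop) (x y : sub S P) :
  ltS x y <-> ltS (proj1_sig x) (proj1_sig y).
Proof. by rewrite /ltS /= -(pair2_comp (@proj1_sig _ _)). Qed.

End Ext.

Lemma tuple_bound (k : nat) (h : 'I_k -> nat) : exists N, forall i, h i < N.
Proof.
exists (\sum_(i < k) h i).+1 => i; rewrite ltnS.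
by rewrite (bigD1 i) //= leq_addr.
Qed.

Section Incr.
Variable L : language.
Variable X : structure L.
Variable e : nat -> X.
Variable idx : X -> nat.
Hypothesis eK : cancel e idx.
Hypothesis idxK : cancel idx e.
Hypothesis Hu : ultrahomogeneous X.
Hypothesis Hs : strong_amalgamation X.
Variable w : Emb X X.

Definition good n (g : nat -> X) (y : X) :=
  pemb (fun z => idx z < n.+1) (fun z => if idx z == n then y else g (idx z)) /\
  (forall j, j < n -> idx (w (g j)) < idx (w y)).

Definition pick n g := epsilon (inhabits (e 0)) (good n g).

Fixpoint G n : nat -> X :=
  match n with 0 => fun _ => e 0
  | n'.+1 => fun j => if j == n' then pick n' (G n') else G n' j end.

Definition aa j := G j.+1 j.

Lemma aaE j : aa j = pick j (G j).
Proof. by rewrite /aa /= eqxx. Qed.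

Lemma G_aa n j : j < n -> G n j = aa j.
Proof.
elim: n => // n IH; rewrite ltnS leq_eqVlt => /orP [/eqP ->|lt] /=.
  by rewrite eqxx aaE.
by rewrite (ltn_eqF lt) IH.
Qed.

Lemma finite_lt n : finite_pred (fun z : X => idx z < n).
Proof.
exists (List.map e (List.seq 0 n)) => z lt; rewrite -(idxK z).
apply: List.in_map; apply/List.in_seq; split; first by apply/leP.
by apply/leP; simpl.
Qed.

Definition Inv n := pemb (fun z => idx z < n) (fun z => aa (idx z)) /\
  (forall i j, i < j -> j < n -> idx (w (aa i)) < idx (w (aa j))).

Lemma pemb_empty (phi : X -> X) : pemb (fun z => idx z < 0) phi.
Proof.
split => // s t Ht; have -> // : phi \o t = t.
by apply: functional_extensionality => i; have := Ht i.
Qed.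

Lemma Inv_step n : Inv n -> Inv n.+1.
Proof.
move=> [Hp Hm].
pose D := fun z => exists j, j < n /\ idx (w z) <= idx (w (aa j)).
have fD : finite_pred D.
  exists (List.flat_map (fun j => List.map (fun m => epsilon (inhabits (e 0)) (fun z => w z = e m))
           (List.seq 0 (idx (w (aa j))).+1)) (List.seq 0 n)).
  move=> z [j [jn le]]; apply/List.in_flat_map; exists j; split.
    by apply/List.in_seq; split; [apply/leP | apply/leP; simpl].
  apply/List.in_map_iff; exists (idx (w z)); split.
    apply: (emb_inj (g:=w)); rewrite (epsilon_spec (inhabits (e 0)) (fun z' => w z' = e (idx (w z)))) //.
    by exists z; rewrite idxK.
  apply/List.in_seq; split; [apply/leP | apply/leP => /=; rewrite ltnS] => //.
have nA : ~ (idx (e n) < n) by rewrite eK ltnn.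
have [y [nDy Hy]] := realize Hu Hs (finite_lt n) fD nA Hp.
have gy : good n (G n) y.
  split.
  - apply: (pemb_ext Hy).
      move=> z; rewrite ltnS leq_eqVlt => /orP [/eqP <-|]; [right; by rewrite idxK | by left].
    move=> z; rewrite ltnS leq_eqVlt => /orP [/eqP ez|lt].
      by rewrite ez eqxx -ez idxK upd_eq.
    rewrite (ltn_eqF lt) upd_neq ?G_aa //.
    by move=> ez; move: lt; rewrite ez eK ltnn.
  - move=> j jn; rewrite G_aa //; rewrite ltnNge; apply/negP => le.
    by apply: nDy; exists j.
have ga : good n (G n) (aa n).
  rewrite aaE; apply: (epsilon_spec (inhabits (e 0)) (good n (G n))); by exists y.
case: ga => Hp' Hm'; split.
- apply: (pemb_ext Hp') => // z lt.
  case: eqP => [ez|nz]; first by rewrite ez.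
  rewrite G_aa //; rewrite ltn_neqAle -ltnS lt andbT; exact/eqP.
- move=> i j ij; rewrite ltnS leq_eqVlt => /orP [/eqP ej|jn]; first subst j.
    by have := Hm' i ij; rewrite G_aa.
  exact: Hm.
Qed.

Lemma Inv_all n : Inv n.
Proof.
elim: n => [|n IH]; last exact: Inv_step.
by split; [exact: pemb_empty | move=> i j _].
Qed.

Lemma incr_emb : exists v : Emb X X,
  forall m n, m < n -> idx (w (v (e m))) < idx (w (v (e n))).
Proof.
have ve : is_emb (fun x => aa (idx x)).
  split.
  - move=> a b eab; have [Hp _] := Inv_all (maxn (idx a) (idx b)).+1.
    apply: (proj1 Hp) => //; rewrite ltnS ?leq_maxl ?leq_maxr //.
  - move=> s t; have [N HN] := tuple_bound (fun i => idx (t i)).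
    have [Hp _] := Inv_all N; exact: (proj2 Hp).
exists (exist _ _ ve) => m n mn /=; rewrite !eK.
have [_ Hm] := Inv_all n.+1; exact: Hm.
Qed.
End Incr.

Section Main.
Variable L : language.
Variable S : structure (ext L).
Variable e : nat -> S.
Variable idx : S -> nat.
Hypothesis eK : cancel e idx.
Hypothesis idxK : cancel idx e.
Hypothesis Hlt : forall m n, ltS (e m) (e n) <-> m < n.
Hypothesis Hu : ultrahomogeneous (reduct S).
Hypothesis Hs : strong_amalgamation (reduct S).
Variable Jr : FinObj (reduct S) -> FinObj (reduct S).
Variable Jrm : forall A B : FinObj (reduct S), Emb (Fin A) (Fin B) -> Emb (Fin (Jr A)) (Fin (Jr B)).
Hypothesis HJsub : forall A : FinObj (reduct S), (forall x, pr A x -> pr (Jr A) x) /\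
        exists p, pr (Jr A) p /\ ~ pr A p /\ forall q, pr (Jr A) q -> ~ pr A q -> q = p.
Hypothesis HJext : forall (A B : FinObj (reduct S)) (f : Emb (Fin A) (Fin B)) (x : Fin (Jr A)) (y : Fin A),
        proj1_sig x = proj1_sig y -> proj1_sig (Jrm f x) = proj1_sig (f y).
Hypothesis HJnew : forall (A B : FinObj (reduct S)) (f : Emb (Fin A) (Fin B)) (x : Fin (Jr A)),
        ~ pr A (proj1_sig x) -> ~ pr B (proj1_sig (Jrm f x)).

Lemma ltSE (x y : S) : ltS x y <-> idx x < idx y.
Proof. by rewrite -{1}(idxK x) -{1}(idxK y) Hlt. Qed.

Definition qpt (A : FinObj (reduct S)) : S :=
  proj1_sig (constructive_indefinite_description _ (proj2 (HJsub A))).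

Lemma qpt_spec A : pr (Jr A) (qpt A) /\ ~ pr A (qpt A) /\
   forall q, pr (Jr A) q -> ~ pr A q -> q = qpt A.
Proof. rewrite /qpt; case: constructive_indefinite_description => //. Qed.

Lemma JrE A z : pr (Jr A) z <-> pr A z \/ z = qpt A.
Proof.
have [Hsub _] := HJsub A; have [Hq [nq Hu']] := qpt_spec A.
split; last by case=> [/Hsub|->].
move=> jz; case: (classic (pr A z)) => az; [by left | right; exact: Hu'].
Qed.

Lemma exists_ppt (A : FinObj S) : exists p : S, (forall a, pr A a -> idx a < idx p) /\
   pemb (X:=reduct S) (pr (Jr A)) (upd id (qpt A) p).
Proof.
pose D := fun z : S => exists a, pr A a /\ idx z <= idx a.
have fA : finite_pred (pr A) by case: (proj2_sig A).
have fD : finite_pred D.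
  case: fA => lA HA.
  exists (List.flat_map (fun a => List.map e (List.seq 0 (idx a).+1)) lA).
  move=> z [a [az le]]; apply/List.in_flat_map; exists a; split; first exact: HA.
  rewrite -(idxK z); apply: List.in_map; apply/List.in_seq; split; first by apply/leP.
  by apply/leP => /=; rewrite ltnS.
have [_ [nq _]] := qpt_spec A.
have [y [nDy Hy]] := realize Hu Hs (A:=pr A) (phi := id) fA fD nq (pemb_id (X:=reduct S) _).
exists y; split.
  move=> a az; rewrite ltnNge; apply/negP => le; apply: nDy; by exists a.
apply: (pemb_ext Hy) => // z /JrE //.
Qed.

Definition ppt (A : FinObj S) : S := proj1_sig (constructive_indefinite_description _ (exists_ppt A)).

Lemma ppt_spec A : (forall a, pr A a -> idx a < idx (ppt A)) /\
   pemb (X:=reduct S) (pr (Jr A)) (upd id (qpt A) (ppt A)).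
Proof. rewrite /ppt; case: constructive_indefinite_description => //. Qed.

Lemma ppt_out A : ~ pr A (ppt A).
Proof. by move=> /(proj1 (ppt_spec A)); rewrite ltnn. Qed.

Definition JP (A : FinObj S) : S -> Prop := fun z => pr A z \/ z = ppt A.

Lemma JP_ok A : finite_pred (JP A) /\ exists x, JP A x.
Proof.
split; last by exists (ppt A); right.
apply: finite_app; first by case: (proj2_sig A).
by exists (ppt A :: nil)%list => z ->; left.
Qed.

Definition JA (A : FinObj S) : FinObj S := exist _ (JP A) (JP_ok A).


Definition extf (A B : FinObj S) (f : Fin A -> Fin B) (x : Fin (JA A)) : Fin (JA B) :=
  match excluded_middle_informative (pr A (proj1_sig x)) with
  | left H => exist (JP B) (proj1_sig (f (exist _ (proj1_sig x) H)))
                    (or_introl (proj2_sig (f (exist _ (proj1_sig x) H))))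
  | right _ => exist (JP B) (ppt B) (or_intror erefl)
  end.

Lemma extf_in A B (f : Fin A -> Fin B) x (H : pr A (proj1_sig x)) :
  proj1_sig (extf f x) = proj1_sig (f (exist _ (proj1_sig x) H)).
Proof.
rewrite /extf; case: excluded_middle_informative => [H'|n] //=.
by rewrite (proof_irrelevance _ H' H).
Qed.

Lemma extf_out A B (f : Fin A -> Fin B) x : ~ pr A (proj1_sig x) ->
  proj1_sig (extf f x) = ppt B.
Proof. by rewrite /extf; case: excluded_middle_informative. Qed.

Lemma JP_out A (x : Fin (JA A)) : ~ pr A (proj1_sig x) -> proj1_sig x = ppt A.
Proof. by case: x => x [|]. Qed.

Lemma ppt_neq_q A z : pr A z -> z <> qpt A.
Proof. by move=> az ez; have [_ [nq _]] := qpt_spec A; apply: nq; rewrite -ez. Qed.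

Lemma extf_emb A B (f : Emb (Fin A) (Fin B)) : is_emb (extf f).
Proof.
apply: ext_emb.
- move=> x y exy; apply: sigE.
  case: (classic (pr A (proj1_sig x))) => ax; case: (classic (pr A (proj1_sig y))) => ay.
  + move: exy => /(f_equal (@proj1_sig _ _)); rewrite (extf_in f ax) (extf_in f ay).
    by move=> /sigE /(emb_inj (g:=f)) /(f_equal (@proj1_sig _ _)).
  + move: exy => /(f_equal (@proj1_sig _ _)); rewrite (extf_in f ax) (extf_out f ay) => E.
    by case: (ppt_out (A:=B)); rewrite -E; apply: proj2_sig.
  + move: exy => /(f_equal (@proj1_sig _ _)); rewrite (extf_in f ay) (extf_out f ax) => E.
    by case: (ppt_out (A:=B)); rewrite E; apply: proj2_sig.
  + by rewrite (JP_out ax) (JP_out ay).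
- move=> s t /=.
  pose fr : Emb (Fin (X:=reduct S) A) (Fin (X:=reduct S) B) := redE f.
  pose jf := fun z : S => match excluded_middle_informative (pr (Jr A) z) with
     | left H => proj1_sig (Jrm fr (exist _ z H)) | right _ => z end.
  have Hjf : pemb (X:=reduct S) (pr (Jr A)) jf.
    apply: (emb_sub_pemb (psi := comp (valE (X:=reduct S) (pr (Jr B))) (Jrm fr))) => z pz.
    rewrite /jf; case: excluded_middle_informative => // H.
    by rewrite (proof_irrelevance _ H pz).
  pose rA := upd id (ppt A) (qpt A).
  have [_ HtA] := ppt_spec A; have [_ HtB] := ppt_spec B.
  have [qA [nqA uqA]] := qpt_spec A; have [qB [nqB uqB]] := qpt_spec B.
  have r1 : forall z, JP A z -> pr (Jr A) (rA z).
    move=> z [az|->]; last by rewrite /rA upd_eq.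
    rewrite /rA upd_neq; first by apply/JrE; left.
    by move=> E; apply: (ppt_out (A:=A)); rewrite -E.
  have r2 : forall z, JP A z -> upd id (qpt A) (ppt A) (rA z) = z.
    move=> z [az|->]; last by rewrite /rA !upd_eq.
    have zp : z <> ppt A by move=> E; apply: (ppt_out (A:=A)); rewrite -E.
    rewrite /rA upd_neq // upd_neq //; exact: ppt_neq_q.
  have r3 : forall z, JP A z -> pr (Jr B) (jf (rA z)).
    move=> z /r1 H; rewrite /jf; case: excluded_middle_informative => // H'.
    exact: proj2_sig.
  have r4 : forall z (Hz : JP A z), upd id (qpt B) (ppt B) (jf (rA z)) =
      proj1_sig (extf f (exist (JP A) z Hz)).
    move=> z Hz; case: (classic (pr A z)) => az.
    + have zp : z <> ppt A by move=> E; apply: (ppt_out (A:=A)); rewrite -E.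
      have rz : rA z = z by rewrite /rA upd_neq.
      rewrite (extf_in f (x := exist (JP A) z Hz) az) rz.
      rewrite /jf; case: excluded_middle_informative => H; last first.
        by exfalso; apply: H; apply/JrE; left.
      rewrite (HJext fr (y := exist _ z az)) //.
      rewrite upd_neq //; apply: ppt_neq_q; exact: proj2_sig.
    + have ez : z = ppt A by case: Hz.
      rewrite (extf_out f (x := exist (JP A) z Hz)) //.
      rewrite /rA ez upd_eq /jf; case: excluded_middle_informative => H; last by [].
      rewrite (uqB _ (proj2_sig _)) ?upd_eq //.
      exact: (@HJnew A B fr (exist _ (qpt A) H) nqA).
  pose u := fun i => proj1_sig (t i).
  have Hu' : forall i, JP A (u i) by move=> i; exact: proj2_sig.
  have E1 : u = upd id (qpt A) (ppt A) \o (rA \o u).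
    by apply: functional_extensionality => i /=; rewrite r2.
  have E2 : (fun i => proj1_sig (extf f (t i))) = upd id (qpt B) (ppt B) \o (jf \o (rA \o u)).
    apply: functional_extensionality => i /=; rewrite /u; case: (t i) => z Hz /=.
    by rewrite r4.
  change (rel S (Some s) u <-> rel S (Some s) (fun i => proj1_sig (extf f (t i)))).
  rewrite E1 E2.
  have h1 := (proj2 HtA) s (rA \o u) (fun i => r1 _ (Hu' i)).
  have h2 := (proj2 Hjf) s (rA \o u) (fun i => r1 _ (Hu' i)).
  have h3 := (proj2 HtB) s (jf \o (rA \o u)) (fun i => r3 _ (Hu' i)).
  simpl in h1, h2, h3.
  by rewrite -h1 -h3.
- move=> x y; rewrite !ltS_sub !ltSE.
  have Hlt' : forall a, pr A a -> idx a < idx (ppt A) by case: (ppt_spec A).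
  have Hlt'' : forall b, pr B b -> idx b < idx (ppt B) by case: (ppt_spec B).
  case: (classic (pr A (proj1_sig x))) => ax; case: (classic (pr A (proj1_sig y))) => ay.
  + rewrite (extf_in f ax) (extf_in f ay).
    have := emb_lt f (exist _ _ ax) (exist _ _ ay); rewrite !ltS_sub !ltSE /=; done.
  + rewrite (extf_in f ax) (extf_out f ay) (JP_out ay) Hlt' // Hlt'' //; exact: proj2_sig.
  + rewrite (extf_in f ay) (extf_out f ax) (JP_out ax).
    rewrite !ltnNge ltnW ?Hlt' // ltnW ?Hlt'' //; exact: proj2_sig.
  + by rewrite (extf_out f ax) (extf_out f ay) (JP_out ax) (JP_out ay) !ltnn.
Qed.


Definition Jm (A B : FinObj S) (f : Emb (Fin A) (Fin B)) : Emb (Fin (JA A)) (Fin (JA B)) :=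
  exist _ (extf f) (extf_emb f).

Lemma extf_incl A B (f : Emb (Fin A) (Fin B)) (a : Fin A) :
  extf f (exist (JP A) (proj1_sig a) (or_introl (proj2_sig a))) =
  exist (JP B) (proj1_sig (f a)) (or_introl (proj2_sig (f a))).
Proof.
apply: sigE; rewrite (extf_in f (x := exist (JP A) (proj1_sig a) (or_introl (proj2_sig a))) (proj2_sig a)) /=.
by congr (proj1_sig (f _)); apply: sigE.
Qed.

Lemma partA : nat_1pt_ext S.
Proof.
exists JA, Jm; split; [|split; [|split; [|split]]].
- move=> A; apply: embE => x; apply: sigE => /=.
  case: (classic (pr A (proj1_sig x))) => ax.
  + by rewrite (extf_in _ ax).
  + by rewrite (extf_out _ ax) (JP_out ax).
- move=> A B C f g; apply: embE => x; apply: sigE => /=.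
  case: (classic (pr A (proj1_sig x))) => ax.
  + rewrite (extf_in _ ax) /=.
    have bx : pr B (proj1_sig (extf f x)) by rewrite (extf_in _ ax); exact: proj2_sig.
    rewrite (extf_in _ bx); congr (proj1_sig (g _)); apply: sigE => /=.
    by rewrite (extf_in _ ax).
  + have bx : ~ pr B (proj1_sig (extf f x)) by rewrite (extf_out _ ax); exact: ppt_out.
    by rewrite (extf_out _ ax) (extf_out _ bx).
- move=> A; split; first by move=> x ax; left.
  exists (ppt A); split; first by right.
  split; first exact: ppt_out.
  by move=> q [|].
- move=> A B f x y exy /=.
  have ax : pr A (proj1_sig x) by rewrite exy; exact: proj2_sig.
  rewrite (extf_in _ ax); congr (proj1_sig (f _)); exact: sigE.
- move=> A B f x ax /=; rewrite (extf_out _ ax); exact: ppt_out.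
Qed.

Lemma Iseg_ok (y : S) : finite_pred (fun z => idx z <= idx y) /\ exists x, idx x <= idx y.
Proof.
split; last by exists y.
exists (List.map e (List.seq 0 (idx y).+1)) => z lt; rewrite -(idxK z).
apply: List.in_map; apply/List.in_seq; split; first by apply/leP.
by apply/leP => /=; rewrite ltnS.
Qed.

Definition Iseg (y : S) : FinObj S := exist _ _ (Iseg_ok y).

Definition phat (A : FinObj S) : Fin (JA A) := exist (JP A) (ppt A) (or_intror erefl).
Definition incl (A : FinObj S) (a : Fin A) : Fin (JA A) :=
  exist (JP A) (proj1_sig a) (or_introl (proj2_sig a)).

Lemma seg_ok A (u : Emb (Fin (JA A)) S) (a : Fin A) : idx (u (incl a)) <= idx (u (phat A)).
Proof.
have := emb_lt u (incl a) (phat A); rewrite ltS_sub !ltSE /= => [[H _]].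
apply: ltnW; apply: H; have [H' _] := ppt_spec A; apply: H'; exact: proj2_sig.
Qed.

Definition segf A (u : Emb (Fin (JA A)) S) (a : Fin A) : Fin (Iseg (u (phat A))) :=
  exist _ (u (incl a)) (seg_ok u a).

Lemma segf_emb A (u : Emb (Fin (JA A)) S) : is_emb (segf u).
Proof.
split.
- move=> a b /(f_equal (@proj1_sig _ _)) /= /(emb_inj (g:=u)) /(f_equal (@proj1_sig _ _)) /=.
  exact: sigE.
- move=> s t; change (rel S s (fun i => proj1_sig (t i)) <-> rel S s (fun i => u (incl (t i)))).
  exact: (emb_rel u (fun i => incl (t i))).
Qed.

Definition Phi (A : FinObj S) (u : Emb (Fin (JA A)) S) : Ucod A :=
  existT (fun C => Emb (Fin A) (Fin C)) (Iseg (u (phat A))) (exist _ (segf u) (segf_emb u)).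

Lemma existT_seg (A : FinObj S) (y y' : S) (E : y = y') (g : Emb (Fin A) (Fin (Iseg y)))
  (g' : Emb (Fin A) (Fin (Iseg y'))) : (forall a, proj1_sig (g a) = proj1_sig (g' a)) ->
  existT (fun C : FinObj S => Emb (Fin A) (Fin C)) (Iseg y) g = existT _ (Iseg y') g'.
Proof. subst y' => H; congr existT; apply: embE => a; exact: sigE. Qed.

Lemma partB : approximable S.
Proof.
exists JA, Phi => A B f u; exists (Jm f).
rewrite /Phi /=; apply: existT_seg => [|a] /=.
- congr (u _); apply: sigE => /=; rewrite (extf_out f); first by [].
  exact: ppt_out.
- by rewrite /incl extf_incl.
Qed.

End Main.

Theorem theorem6p7 (L : language) (S : structure (ext L))
  (Henum : enumerated S)
  (Hfraisse : fraisse_limit (reduct S))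
  (Hbrd : finite_big_ramsey_degrees (reduct S))
  (Hsap : strong_amalgamation (reduct S))
  (H1pt : nat_1pt_ext (reduct S)) :
  (* (a) *) nat_1pt_ext S /\
  (* (b) *) approximable S /\
  (* (c) *)
  (forall (F : FinObj S -> FinObj S)
          (Fm : forall A B : FinObj S, Emb (Fin A) (Fin B) -> Emb (Fin (F A)) (Fin (F B)))
          (Phi : forall A : FinObj S, Emb (Fin (F A)) S -> Ucod A)
          (iota : forall B : FinObj S, Emb (Fin B) S),
      is_functor F Fm -> approx_via F Phi ->
      forall A : FinObj S, exists n : nat,
        forall (k : nat) (chi : Ucod A -> 'I_k),
        exists h : Emb S S, exists s : seq 'I_k,
          (size s <= n)%N /\
          forall (B : FinObj S) (f : Emb (Fin A) (Fin B)), chi (star F Phi iota h f) \in s).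
Proof.
case: Henum => e [[idx eK idxK] Hlt].
case: Hfraisse => _ Hu.
case: H1pt => Jr [Jrm [_ [_ [HJsub [HJext HJnew]]]]].
split; first exact: (partA idxK Hlt Hu Hsap HJsub HJext HJnew).
split; first exact: (partB idxK Hlt Hu Hsap HJsub HJext HJnew).
move=> F Fm Phi iota _ Happ A.
have fFA : finite_pred (pr (F A)) by case: (proj2_sig (F A)).
have [n Hn] := Hbrd (reduct (Fin (F A))) (age_sub (X:=reduct S) fFA).
exists n => k chi.
pose chi' := fun e' : Emb (reduct (Fin (F A))) (reduct S) =>
  match excluded_middle_informative (is_emb (A:=Fin (F A)) (B:=S) e') with
  | left p => chi (Phi A (exist _ _ p))
  | right _ => chi (existT _ A (id_emb (Fin A))) end.
have [w [s [Hsz Hw]]] := Hn k chi'.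
have [v Hv] := @incr_emb L (reduct S) e idx eK idxK Hu Hsap w.
have mono : forall m m', m < m' <-> idx (w (v (e m))) < idx (w (v (e m'))).
  move=> m m'; split; first exact: Hv.
  case: (ltnP m m') => // le lt; exfalso.
  move: le; rewrite leq_eqVlt => /orP [/eqP E|/Hv]; first by move: lt; rewrite E ltnn.
  by move=> lt'; have := ltn_trans lt lt'; rewrite ltnn.
have hemb : is_emb (A:=S) (B:=S) (fun x => w (v x)).
  apply: ext_emb.
  - by move=> x y /(emb_inj (g:=w)) /(emb_inj (g:=v)).
  - move=> s' t; exact: (iff_trans (emb_rel v t) (emb_rel w (v \o t))).
  - move=> x y; rewrite !(ltSE idxK Hlt) -{1}(idxK x) -{1}(idxK y) !eK mono !idxK //.
pose h : Emb S S := exist _ _ hemb.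
exists h, s; split => // B f.
have [f' Hf'] := Happ A B f (comp h (iota (F B))).
rewrite /star -Hf'.
pose ee : Emb (reduct (Fin (F A))) (reduct S) := comp v (redE (comp (iota (F B)) f')).
have := Hw ee; rewrite /chi' /=.
case: excluded_middle_informative => [p|np].
- by have -> : exist _ _ p = comp (comp h (iota (F B))) f' by apply: sigE.
- by case: np; exact: (proj2_sig (comp (comp h (iota (F B))) f')).
Qed.
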